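(* Let $\chi$ be a character of type $\langle l,m\rangle$ with standard expansion $$\chi=x_l\mathfrak{Z}_l+\sum_{1\le j\le m,\,p\nmid j}b_j\cdot p\,\mathfrak{Z}_j,\qquad x_l,b_j\in\{0,\dots,p-1\}.$$ Then $\chi$ is strictly equivalent to the character $$x_l\mathfrak{Z}_l+\sum_{\substack{m-l\le j\le m\\ p\nmid j}}b_j\cdot p\,\mathfrak{Z}_j,$$ with the same coefficients $x_l$ and $b_j$ ($m-l\le j\le m$, $p\nmid j$) as in $\chi$.
   Context: Let $p$ be a prime, $U_1=1+t\mathbb{F}_p[[t]]$, $U_j=1+t^j\mathbb{F}_p[[t]]$, with the $t$-adic topology. The Nottingham group $\mathcal{N}$ over $\mathbb{F}_p$ is the set of power series $u(t)=t(1+c_1t+\cdots)$, $c_i\in\mathbb{F}_p$, under composition. A character is a continuous homomorphism $\chi:U_1\to\mathbb{Z}/p^2\mathbb{Z}$; $\mathcal{N}$ acts by ${}_u\chi(f(t))=\chi(f(u(t)))$. Characters $\chi,\psi$ are strictly equivalent if $\psi={}_u\chi$ for some $u\in\mathcal{N}$ with $\chi(u(t)/t)=0$. A surjective character has type $\langle l,m\rangle$ where $l$ is the largest $b$ with $\chi(U_b)\not\subset p\mathbb{Z}/p^2\mathbb{Z}$ and $m$ the largest $b$ with $\chi(U_b)\ne0$. Put $E_j=1+t^j$; the $E_j$ with $p\nmid j$ form a topological $\mathbb{Z}_p$-basis of $U_1$, and for $p\nmid j$, $\mathfrak{Z}_j$ is the character with $\mathfrak{Z}_j(E_i)=\delta_{ij}$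 for $p\nmid i$ (so a character is determined by its values on the $E_i$, $p\nmid i$). *)

(* Defs.v *)
From HB Require Import structures.
From mathcomp Require Import all_boot all_order all_algebra.
Set Implicit Arguments. Unset Strict Implicit. Unset Printing Implicit Defensive.
Import GRing.Theory.
Local Open Scope ring_scope.

(* Formal power series over F_p, as coefficient sequences: f n = coefficient of t^n. *)
Definition pser (p : nat) := nat -> 'F_p.

Definition ps_mul (p : nat) (f g : pser p) : pser p :=
  fun n => \sum_(k < n.+1) f k * g (n - k)%N.

Definition ps_one (p : nat) : pser p := fun n => if n == 0%N then 1 else 0.

Definition ps_exp (p : nat) (u : pser p) (k : nat) : pser p :=
  iter k (ps_mul u) (ps_one p).

(* Composition f(u(t)), meaningful when u has zero constant term
   (then u^k has t-adic order >= k, so the sum below is exact). *)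
Definition ps_comp (p : nat) (f u : pser p) : pser p :=
  fun n => \sum_(k < n.+1) f k * ps_exp u k n.

Definition inU (p : nat) (j : nat) (f : pser p) : Prop :=
  f 0%N = 1 /\ forall n, (0 < n < j)%N -> f n = 0.

Definition E (p : nat) (j : nat) : pser p :=
  fun n => if n == 0%N then 1 else if n == j then 1 else 0.

Definition nottingham (p : nat) (u : pser p) : Prop := u 0%N = 0 /\ u 1%N = 1.

Definition ps_divt (p : nat) (u : pser p) : pser p := fun n => u n.+1.

(* A character: continuous homomorphism U_1 -> Z/p^2Z.  Only values on U_1
   are meaningful.  Continuity (target discrete) = kernel contains some U_j. *)
Definition is_character (p : nat) (chi : pser p -> 'Z_(p ^ 2)) : Prop :=
  (forall f g, inU 1 f -> inU 1 g -> chi (ps_mul f g) = chi f + chi g) /\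
  (exists j, (0 < j)%N /\ forall f, inU j f -> chi f = 0).

Definition surjective_char (p : nat) (chi : pser p -> 'Z_(p ^ 2)) : Prop :=
  forall z : 'Z_(p ^ 2), exists f, inU 1 f /\ chi f = z.

Definition not_in_pZ (p : nat) (chi : pser p -> 'Z_(p ^ 2)) (b : nat) : Prop :=
  exists f, inU b f /\ ~~ (p %| (chi f : nat))%N.

Definition nonzero_on (p : nat) (chi : pser p -> 'Z_(p ^ 2)) (b : nat) : Prop :=
  exists f, inU b f /\ chi f <> 0.

Definition char_type (p : nat) (chi : pser p -> 'Z_(p ^ 2)) (l m : nat) : Prop :=
  ((0 < l)%N /\ not_in_pZ chi l /\ (forall b, (0 < b)%N -> not_in_pZ chi b -> (b <= l)%N)) /\
  ((0 < m)%N /\ nonzero_on chi m /\ (forall b, (0 < b)%N -> nonzero_on chi b -> (b <= m)%N)).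

Definition act (p : nat) (u : pser p) (chi : pser p -> 'Z_(p ^ 2)) : pser p -> 'Z_(p ^ 2) :=
  fun f => chi (ps_comp f u).

(* Main.v *)
Require Import Defs.
From HB Require Import structures.
From mathcomp Require Import all_boot all_order all_algebra.
From Stdlib Require Import FunctionalExtensionality.
From mathcomp Require Import ring zify.
Import GRing.Theory.
Local Open Scope ring_scope.
Set Implicit Arguments. Unset Strict Implicit.

Definition pop (p : nat) (q : {poly 'F_p}) : pser p := fun n => q`_n.
Arguments pop {p} q _.

Lemma pop_mul p (q r : {poly 'F_p}) : ps_mul (pop q) (pop r) = pop (q * r).
Proof. apply: functional_extensionality => n. by rewrite /ps_mul /pop coefM. Qed.

Lemma pop_one p : ps_one p = pop 1.
Proof. apply: functional_extensionality => n. by rewrite /ps_one /pop coef1; case: (n == 0)%N. Qed.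

Lemma pop_exp p (u : {poly 'F_p}) k : ps_exp (pop u) k = pop (u ^+ k).
Proof.
elim: k => [|k IH]; first by rewrite expr0 /ps_exp /= pop_one.
by rewrite /ps_exp iterS -/(ps_exp _ _) IH pop_mul exprS.
Qed.

Lemma E_pop p i : (0 < i)%N -> E p i = pop (1 + 'X^i).
Proof.
move=> hi; apply: functional_extensionality => n.
rewrite /E /pop coefD coef1 coefXn.
have [->|n0] := eqVneq n 0%N.
  by rewrite eq_sym (negbTE (lt0n_neq0 hi)) addr0.
by rewrite add0r; case: (n == i).
Qed.

Lemma sum_delta p (n j : nat) (F : nat -> 'F_p) :
  \sum_(k < n) ((k : nat) == j)%:R * F k = if (j < n)%N then F j else 0.
Proof.
case: ltnP => h.
  rewrite (bigD1 (Ordinal h)) //=.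
  have -> : ((Ordinal h : nat) == j) = true by apply/eqP.
  rewrite mul1r big1 ?addr0 // => k hk.
  suff -> : (nat_of_ord k == j) = false by rewrite mul0r.
  apply/negbTE; apply: contra hk => /eqP e; apply/eqP/val_inj => /=; exact: e.
rewrite big1 // => k _.
suff -> : (nat_of_ord k == j) = false by rewrite mul0r.
apply/negbTE; apply/eqP => e; move: (ltn_ord k); rewrite e; by rewrite ltnNge h.
Qed.

Lemma comp_pop p i (w : {poly 'F_p}) : (0 < i)%N ->
  ps_comp (E p i) (pop ('X * w)) = pop (1 + ('X * w) ^+ i).
Proof.
move=> hi; apply: functional_extensionality => n.
rewrite /ps_comp.
have hE : forall k, E p i k = (k == 0%N)%:R + (k == i)%:R.
  move=> k; rewrite /E; have [->|k0] := eqVneq k 0%N.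
    by rewrite eq_sym (negbTE (lt0n_neq0 hi)) addr0.
  by rewrite add0r; case: (k == i).
under eq_bigr => k _ do rewrite hE mulrDl pop_exp.
rewrite big_split /= !(@sum_delta _ _ _ (fun k => pop (('X * w) ^+ k) n)) /=.
rewrite /pop expr0 coefD; congr (_ + _).
case: ltnP => // h.
by rewrite exprMn_comm ?coefXnM ?h //; apply: mulrC.
Qed.

Lemma divt_pop p (w : {poly 'F_p}) : ps_divt (pop ('X * w)) = pop w.
Proof. apply: functional_extensionality => n. by rewrite /ps_divt /pop coefXM. Qed.

Lemma coef0_exp p (w : {poly 'F_p}) i : (w ^+ i)`_0 = w`_0 ^+ i.
Proof. elim: i => [|i IH]; first by rewrite !expr0 coef1. by rewrite !exprS coef0M IH. Qed.

Lemma divXn p (q : {poly 'F_p}) n : (forall k, (k < n)%N -> q`_k = 0) -> q = 'X^n * drop_poly n q.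
Proof.
move=> h; rewrite -{1}(poly_take_drop n q) mulrC.
suff -> : take_poly n q = 0 by rewrite add0r.
apply/polyP => k; rewrite coef_take_poly coef0; case: ifP => // /h; done.
Qed.

Lemma inv_mod p (q : {poly 'F_p}) N : (0 < N)%N -> q`_0 = 1 ->
  exists (r t : {poly 'F_p}), r`_0 = 1 /\ q * r = 1 + 'X^N * t.
Proof.
move=> N0 q0.
have [t ht] : exists t, 1 - q = 'X * t.
  exists (drop_poly 1 (1 - q)); rewrite -['X]expr1; apply: divXn => k; rewrite ltnS leqn0 => /eqP ->.
  by rewrite coefB coef1 q0 subrr.
exists (\sum_(i < N) 1 ^+ (N.-1 - i) * (1 - q) ^+ i), (- t ^+ N).
have e : q * (\sum_(i < N) 1 ^+ (N.-1 - i) * (1 - q) ^+ i) = 1 + 'X^N * (- t ^+ N).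
  have := subrXX 1 (1 - q) N; rewrite expr1n (_ : 1 - (1 - q) = q); last by rewrite opprB addrC subrK.
  move=> <-.
  by rewrite ht exprMn mulrN.
split; last exact: e.
have := congr1 (fun r : {poly 'F_p} => r`_0) e; rewrite /= coef0M q0 mul1r => ->.
by rewrite coefD coef1 coefXnM N0 /= addr0.
Qed.

Lemma inU_form p n (s : {poly 'F_p}) : (0 < n)%N -> inU n (pop (1 + 'X^n * s)).
Proof.
move=> n0; split; first by rewrite /pop coefD coef1 coefXnM n0 addr0.
move=> k /andP [k0 kn]; rewrite /pop coefD coef1 coefXnM kn addr0.
by rewrite eqn0Ngt k0.
Qed.

Lemma chi_mul p (chi : pser p -> 'Z_(p ^ 2)) : is_character chi ->
  forall q r : {poly 'F_p}, q`_0 = 1 -> r`_0 = 1 ->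
  chi (pop (q * r)) = chi (pop q) + chi (pop r).
Proof.
move=> [hm _] q r q0 r0; rewrite -pop_mul; apply: hm.
  by split=> // k /andP [a b]; move: a b; case: k.
by split=> // k /andP [a b]; move: a b; case: k.
Qed.

Lemma chi1 p (chi : pser p -> 'Z_(p ^ 2)) : is_character chi -> chi (pop 1) = 0.
Proof.
move=> hc; have := chi_mul hc (coef1 _ 0) (coef1 _ 0); rewrite mulr1.
by move/(congr1 (fun z => z - chi (pop 1))); rewrite subrr addrK => <-.
Qed.

Lemma K1 p (chi : pser p -> 'Z_(p ^ 2)) l m n (s : {poly 'F_p}) :
  char_type chi l m -> (m < n)%N -> chi (pop (1 + 'X^n * s)) = 0.
Proof.
move=> [_ [m0 [_ Hm]]] mn.
have [//|hne] := eqVneq (chi (pop (1 + 'X^n * s))) 0.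
have n0 : (0 < n)%N by apply: leq_ltn_trans mn.
suff: (n <= m)%N by rewrite leqNgt mn.
apply: (Hm n n0); exists (pop (1 + 'X^n * s)).
by split; [exact: inU_form | move/eqP: hne].
Qed.

Lemma K2 p (chi : pser p -> 'Z_(p ^ 2)) l m n (s : {poly 'F_p}) :
  char_type chi l m -> (l < n)%N -> exists y, chi (pop (1 + 'X^n * s)) = p%:R * y.
Proof.
move=> [[l0 [_ Hl]] _] ln.
have n0 : (0 < n)%N by apply: leq_ltn_trans ln.
set z := chi _.
have hz : (p %| z)%N.
  apply/negPn/negP => hn.
  suff: (n <= l)%N by rewrite leqNgt ln.
  apply: (Hl n n0); exists (pop (1 + 'X^n * s)).
  by split; [exact: inU_form | exact: hn].
exists ((z : nat) %/ p)%:R; rewrite -natrM mulnC divnK //.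
by rewrite natr_Zp.
Qed.

Lemma Dcore p (chi : pser p -> 'Z_(p ^ 2)) l m n (q s : {poly 'F_p}) :
  is_character chi -> char_type chi l m -> q`_0 = 1 -> (0 < n)%N -> (n <= m.+1)%N ->
  exists s'' : {poly 'F_p}, s''`_0 = s`_0 /\
    chi (pop (q + 'X^n * s)) = chi (pop q) + chi (pop (1 + 'X^n * s'')).
Proof.
move=> hc ct q0 n0 nm.
have [r [t [r0 hr]]] := @inv_mod _ q (m.+2) (ltn0Sn _) q0.
have hqr : chi (pop q) + chi (pop r) = 0.
  by rewrite -chi_mul // hr (K1 _ ct).
have q'0 : (q + 'X^n * s)`_0 = 1 by rewrite coefD coefXnM n0 addr0.
exists (s * r + 'X^(m.+2 - n) * t); split.
  by rewrite coefD coef0M r0 mulr1 coefXnM subn_gt0 ltnS nm addr0.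
have e : (q + 'X^n * s) * r = 1 + 'X^n * (s * r + 'X^(m.+2 - n) * t).
  rewrite mulrDl hr.
  have -> : 'X^(m.+2) = 'X^n * 'X^(m.+2 - n) :> {poly 'F_p} by rewrite -exprD subnKC // leqW.
  ring.
have := chi_mul hc q'0 r0; rewrite e => ->.
by rewrite addrCA hqr addr0.
Qed.

Lemma D1 p (chi : pser p -> 'Z_(p ^ 2)) l m n (q s : {poly 'F_p}) :
  is_character chi -> char_type chi l m -> q`_0 = 1 -> (m < n)%N ->
  chi (pop (q + 'X^n * s)) = chi (pop q).
Proof.
move=> hc ct q0 mn.
have -> : 'X^n * s = 'X^(m.+1) * ('X^(n - m.+1) * s).
  by rewrite mulrA -exprD subnKC.
have [s'' [_ ->]] := Dcore (n:=m.+1) ('X^(n - m.+1) * s) hc ct q0 (ltn0Sn _) (leqnn _).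
by rewrite (K1 _ ct (ltnSn m)) addr0.
Qed.

Lemma D2 p (chi : pser p -> 'Z_(p ^ 2)) l m n (q s : {poly 'F_p}) :
  is_character chi -> char_type chi l m -> q`_0 = 1 -> (l < n)%N ->
  exists y, chi (pop (q + 'X^n * s)) = chi (pop q) + p%:R * y.
Proof.
move=> hc ct q0 ln.
case: (leqP n m.+1) => nm.
  have n0 : (0 < n)%N by apply: leq_ltn_trans ln.
  have [s'' [_ ->]] := Dcore (n:=n) s hc ct q0 n0 nm.
  have [y ->] := K2 s'' ct ln; by exists y.
exists 0; rewrite mulr0 addr0; apply: (D1 _ hc ct q0); exact: ltnW.
Qed.

Definition gam p (chi : pser p -> 'Z_(p ^ 2)) m := chi (pop (1 + 'X^m)).

Lemma fadd p (chi : pser p -> 'Z_(p ^ 2)) l m (a b : 'F_p) :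
  is_character chi -> char_type chi l m ->
  chi (pop (1 + 'X^m * (a + b)%:P)) = chi (pop (1 + 'X^m * a%:P)) + chi (pop (1 + 'X^m * b%:P)).
Proof.
move=> hc ct; have m0 : (0 < m)%N by case: ct => _ [].
have h0 : forall c : 'F_p, (1 + 'X^m * c%:P)`_0 = 1.
  by move=> c; rewrite coefD coef1 coefXnM m0 addr0.
rewrite -chi_mul // (_ : (1 + 'X^m * a%:P) * (1 + 'X^m * b%:P) =
   (1 + 'X^m * (a + b)%:P) + 'X^(m + m) * (a * b)%:P).
  by rewrite (D1 _ hc ct (h0 _)) // -{1}(add0n m) ltn_add2r.
rewrite exprD polyCD polyCM; ring.
Qed.

Lemma fnat p (chi : pser p -> 'Z_(p ^ 2)) l m k :
  is_character chi -> char_type chi l m ->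
  chi (pop (1 + 'X^m * (k%:R : 'F_p)%:P)) = gam chi m *+ k.
Proof.
move=> hc ct; elim: k => [|k IH]; first by rewrite polyC0 mulr0 addr0 chi1.
by rewrite -natr1 (fadd _ _ hc ct) IH polyC1 mulr1 mulrSr.
Qed.

Lemma fval p (chi : pser p -> 'Z_(p ^ 2)) l m (c : 'F_p) :
  is_character chi -> char_type chi l m ->
  chi (pop (1 + 'X^m * c%:P)) = gam chi m *+ (c : nat).
Proof. by move=> hc ct; rewrite -(fnat _ hc ct) natr_Zp. Qed.

Lemma gam_p p (chi : pser p -> 'Z_(p ^ 2)) l m : prime p ->
  is_character chi -> char_type chi l m -> gam chi m *+ p = 0.
Proof. by move=> hp hc ct; rewrite -(fnat p hc ct) pchar_Fp_0 // polyC0 mulr0 addr0 chi1. Qed.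

Lemma K3 p (chi : pser p -> 'Z_(p ^ 2)) l m (s : {poly 'F_p}) :
  is_character chi -> char_type chi l m ->
  chi (pop (1 + 'X^m * s)) = gam chi m *+ (nat_of_ord (s`_0)%R).
Proof.
move=> hc ct; have m0 : (0 < m)%N by case: ct => _ [].
have [t ht] : exists t, s - (s`_0)%:P = 'X * t.
  exists (drop_poly 1 (s - (s`_0)%:P)); rewrite -['X]expr1; apply: divXn => k.
  by rewrite ltnS leqn0 => /eqP ->; rewrite coefB coefC subrr.
have -> : 1 + 'X^m * s = (1 + 'X^m * (s`_0)%:P) + 'X^(m.+1) * t.
  by rewrite exprSr -mulrA -ht; ring.
rewrite (D1 _ hc ct); first exact: (fval _ hc ct).
  by rewrite coefD coef1 coefXnM m0 addr0.
by [].
Qed.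

Lemma D3 p (chi : pser p -> 'Z_(p ^ 2)) l m (q s : {poly 'F_p}) :
  is_character chi -> char_type chi l m -> q`_0 = 1 ->
  chi (pop (q + 'X^m * s)) = chi (pop q) + gam chi m *+ (nat_of_ord (s`_0)%R).
Proof.
move=> hc ct q0; have m0 : (0 < m)%N by case: ct => _ [].
have [s'' [e ->]] := Dcore (n:=m) s hc ct q0 m0 (leqnSn _).
by rewrite (K3 _ hc ct) e.
Qed.

Lemma powdiff p (w w' d : {poly 'F_p}) K i : w`_0 = 1 -> (0 < K)%N -> w' = w + 'X^K * d ->
  exists S : {poly 'F_p}, S`_0 = i%:R * d`_0 /\ w' ^+ i = w ^+ i + 'X^K * S.
Proof.
move=> w0 K0 ->; elim: i => [|i [S [S0 e]]].
  by exists 0; rewrite coef0 mul0r mulr0 addr0 !expr0.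
exists (d * w ^+ i + w * S + 'X^K * d * S); split.
  rewrite !coefD !coef0M coef0_exp w0 expr1n mul1r mulr1 S0 coefXn.
  rewrite eq_sym (negbTE (lt0n_neq0 K0)) mul0r mul0r addr0.
  by rewrite -natr1 mulrDl mul1r addrC.
by rewrite exprS e exprS; ring.
Qed.

Lemma ps_mul_trunc p (f g : pser p) N n : (n < N)%N ->
  ps_mul f g n = ps_mul (pop (\poly_(i < N) f i)) g n.
Proof.
move=> nN; apply: eq_bigr => k _; rewrite /pop coef_poly.
by rewrite (leq_ltn_trans _ nN) // -ltnS ltn_ord.
Qed.

Lemma kill_ser p (chi : pser p -> 'Z_(p ^ 2)) l m (g : pser p) :
  char_type chi l m -> inU m.+1 g -> chi g = 0.
Proof.
move=> [_ [m0 [_ Hm]]] hg.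
have [//|hne] := eqVneq (chi g) 0.
suff: (m.+1 <= m)%N by rewrite ltnn.
apply: (Hm m.+1 (ltn0Sn _)); exists g; split=> //; exact/eqP.
Qed.

Lemma gam_nz p (chi : pser p -> 'Z_(p ^ 2)) l m :
  is_character chi -> char_type chi l m -> gam chi m != 0.
Proof.
move=> hc ct; have ct' := ct; case: ct' => _ [m0 [[f [[f0 fU] fnz]] _]].
set Pf := \poly_(i < m.+2) f i.
have P0 : Pf`_0 = 1 by rewrite coef_poly.
have [r [t [r0 hr]]] := @inv_mod _ Pf (m.+2) (ltn0Sn _) P0.
have e1 : chi (ps_mul f (pop r)) = chi f + chi (pop r).
  case: hc => hm _; apply: hm.
    by split=> // k /andP [a b]; move: a b; case: k.
  by split; [rewrite /pop r0 | move=> k /andP [a b]; move: a b; case: k].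
have e2 : chi (ps_mul f (pop r)) = 0.
  apply: (kill_ser ct); split.
    by rewrite (@ps_mul_trunc _ _ _ m.+2) // pop_mul -/Pf hr /pop coefD coef1 coefXnM /= addr0.
  move=> k /andP [k0 km]; rewrite (@ps_mul_trunc _ _ _ m.+2) ?(ltn_trans km) //.
  rewrite pop_mul -/Pf hr /pop coefD coef1 coefXnM (ltn_trans km) // addr0.
  by rewrite eqn0Ngt k0.
have e3 : chi (pop Pf) + chi (pop r) = 0.
  by rewrite -chi_mul // hr (K1 _ ct).
have ef : chi f = chi (pop Pf).
  have h1 : chi f = - chi (pop r) by apply/eqP; rewrite -addr_eq0 -e1 e2.
  have h2 : chi (pop Pf) = - chi (pop r) by apply/eqP; rewrite -addr_eq0 e3.
  by rewrite h1 h2.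
have hPf : Pf = 1 + 'X^m * drop_poly m (Pf - 1).
  have hd : Pf - 1 = 'X^m * drop_poly m (Pf - 1).
    apply: divXn => k km; rewrite coefB coef1 coef_poly (ltn_trans km) //.
    case: k km => [|k] km /=; first by rewrite f0 subrr.
    by rewrite fU ?subr0.
  by rewrite -hd addrC subrK.
apply/eqP => g0; apply: fnz; rewrite ef hPf (K3 _ hc ct).
by rewrite /gam in g0; rewrite /gam g0 mul0rn.
Qed.

Lemma pmul_mod (p a b : nat) : (1 < p)%N -> (a %% p = b %% p)%N ->
  (((p * a)%N)%:R : 'Z_(p ^ 2)) = ((p * b)%N)%:R.
Proof.
move=> p1 e.
have p2 : (1 < p ^ 2)%N by rewrite -mulnn (leq_trans p1) // leq_pmulr // ltnW.
by rewrite -(Zp_nat_mod p2 (p * a)) -(Zp_nat_mod p2 (p * b)) -mulnn -!muln_modr e.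
Qed.

Lemma N1 p (ga z : 'Z_(p ^ 2)) : prime p -> ga != 0 -> (exists g, ga = p%:R * g) ->
  (exists y, z = p%:R * y) -> exists c : nat, z = ga *+ c.
Proof.
move=> hp gnz [g eg] [y ey].
have p1 := prime_gt1 hp.
have p2 : (1 < p ^ 2)%N by rewrite -mulnn (leq_trans p1) // leq_pmulr // ltnW.
set g' := nat_of_ord g; set y' := nat_of_ord y.
have hg : (g'%:R : 'F_p) != 0.
  apply/eqP => h; move/eqP: gnz; apply; rewrite eg.
  have : (g' %% p = 0)%N by have := congr1 (@nat_of_ord _) h; rewrite val_Fp_nat.
  move/eqP; rewrite -/(dvdn p g') => /dvdnP [k ek].
  rewrite -(natr_Zp g) -/g' ek -natrM mulnCA mulnn.
  by rewrite natrM pchar_Zp // mulr0.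
set c := nat_of_ord ((y'%:R : 'F_p) / g'%:R).
exists c.
have e : ((c * g') %% p = y' %% p)%N.
  rewrite -!(val_Fp_nat hp) natrM /c natr_Zp divfK //.
rewrite ey eg -mulrnAr -{1}(natr_Zp y) -/y' -(natr_Zp g) -/g' -!natrM -mulrnA -natrM.
by apply: pmul_mod => //; rewrite mulnC.
Qed.

Lemma gam_mod p (chi : pser p -> 'Z_(p ^ 2)) l m c : prime p ->
  is_character chi -> char_type chi l m -> gam chi m *+ (c %% p) = gam chi m *+ c.
Proof.
move=> hp hc ct; rewrite {2}(divn_eq c p) mulrnDr mulnC mulrnA (gam_p hp hc ct).
by rewrite mul0rn add0r.
Qed.

Lemma G2 p (w w' d : {poly 'F_p}) K i : w`_0 = 1 -> (0 < K)%N -> w' = w + 'X^K * d ->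
  exists S : {poly 'F_p}, S`_0 = i%:R * d`_0 /\
    1 + ('X * w') ^+ i = (1 + ('X * w) ^+ i) + 'X^(i + K) * S.
Proof.
move=> w0 K0 e; have [S [S0 eS]] := powdiff i w0 K0 e.
exists S; split=> //; rewrite !exprMn eS exprD; ring.
Qed.

Lemma q0lem p (w : {poly 'F_p}) i : (0 < i)%N -> (1 + ('X * w) ^+ i)`_0 = 1.
Proof. by move=> i0; rewrite coefD coef1 coef0_exp coefXM /= expr0n; case: i i0 => //= i _; rewrite addr0. Qed.

Lemma q0X p i : (0 < i)%N -> (1 + 'X^i : {poly 'F_p})`_0 = 1.
Proof. by move=> i0; rewrite coefD coef1 coefXn; case: i i0 => //= i _; rewrite addr0. Qed.

Lemma claim p (hp : prime p) (chi : pser p -> 'Z_(p ^ 2)) l m (b : nat -> nat) :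
  is_character chi -> char_type chi l m -> (l < m)%N ->
  forall d, (l.+1 + d <= m)%N -> exists (w s : {poly 'F_p}), w = 1 + 'X^(l.+1) * s /\
   forall i, ~~ (p %| i)%N -> (m - (l.+1 + d) < i)%N -> (i < m - l)%N ->
     chi (pop (1 + ('X * w) ^+ i)) = chi (pop (1 + 'X^i)) - p%:R * (b i)%:R.
Proof.
move=> hc ct lm.
have gform : exists g, gam chi m = p%:R * g.
  by have [y hy] := K2 1 ct lm; exists y; rewrite /gam -hy mulr1.
elim=> [|d IH] hd.
  exists 1, 0; split; first by rewrite mulr0 addr0.
  move=> i _ h1 h2; exfalso; lia.
have hd' : (l.+1 + d <= m)%N by lia.
have [w [s [ew Hw]]] := IH hd'.
set K := (l.+1 + d)%N.
have K0 : (0 < K)%N by rewrite /K addSn.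
have Km : (K < m)%N by move: hd; rewrite /K addnS.
set i0 := (m - K)%N.
have i00 : (0 < i0)%N by rewrite /i0 subn_gt0.
have w0 : w`_0 = 1 by rewrite ew coefD coef1 coefXnM /= addr0.
case: (boolP (p %| i0)%N) => hi0.
  exists w, s; split=> // i hi h1 h2.
  have ne : i <> i0 by move=> e; move: hi; rewrite e hi0.
  apply: Hw => //; rewrite -/K; move: h1; rewrite /i0 in ne; lia.
have q0 := q0lem w i00.
have [y hy] : exists y, chi (pop (1 + ('X * w) ^+ i0)) = chi (pop (1 + 'X^i0)) + p%:R * y.
  have [S [_ eS]] := @G2 _ 1 w s (l.+1) i0 (coef1 _ 0) (ltn0Sn _) ew.
  rewrite eS mulr1; apply: (D2 _ hc ct (q0X _ i00)); lia.
set z := chi (pop (1 + 'X^i0)) - p%:R * (b i0)%:R - chi (pop (1 + ('X * w) ^+ i0)).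
have zp : exists y', z = p%:R * y' by exists (- (b i0)%:R - y); rewrite /z hy; ring.
have [c ec] := N1 hp (gam_nz hc ct) gform zp.
have i0nz : (i0%:R : 'F_p) != 0.
  apply/eqP => h; move: hi0; rewrite /dvdn -(val_Fp_nat hp) h; by [].
set del := (c%:R : 'F_p) / i0%:R.
exists (w + 'X^K * del%:P), (s + 'X^(K - l.+1) * del%:P); split.
  have -> : 'X^K = 'X^(l.+1) * 'X^(K - l.+1) :> {poly 'F_p}.
    by rewrite -exprD subnKC // /K leq_addr.
  rewrite ew; ring.
move=> i hi h1 h2.
have [S [S0 eS]] := @G2 _ w (w + 'X^K * del%:P) del%:P K i w0 K0 erefl.
case: (eqVneq i i0) => [ei|ne].
  rewrite ei in eS S0 *; rewrite eS (_ : (i0 + K = m)%N); last by rewrite /i0 subnK // ltnW.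
  rewrite (D3 _ hc ct q0) S0 coefC eqxx /del [i0%:R * _]mulrC divfK // (val_Fp_nat hp) (gam_mod _ hp hc ct).
  by rewrite -ec /z addrC subrK.
have ne' : i <> i0 by apply/eqP.
have h1' : (m - K < i)%N by move: h1; rewrite /i0 in ne'; rewrite -/K in ne' *; lia.
rewrite eS (D1 _ hc ct (q0lem _ (leq_ltn_trans (leq0n _) h1'))); last by lia.
exact: Hw.
Qed.

Unset Implicit Arguments.

Theorem proposition4p2 (p : nat) (hp : prime p) (chi : pser p -> 'Z_(p ^ 2))
  (l m : nat) (x : nat) (b : nat -> nat) :
  is_character chi -> surjective_char chi -> char_type chi l m ->
  (x < p)%N ->
  (forall j, (1 <= j <= m)%N -> ~~ (p %| j)%N -> (b j < p)%N) ->
  (* standard expansion chi = x Z_l + sum_{1<=j<=m, p∤j} b_j p Z_j,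
     expressed through the values on the basis elements E_i, p ∤ i *)
  (forall i, ~~ (p %| i)%N ->
     chi (E p i) = (if i == l then x%:R else 0)
                   + p%:R * (if (i <= m)%N then (b i)%:R else 0)) ->
  (* chi is strictly equivalent to x Z_l + sum_{m-l<=j<=m, p∤j} b_j p Z_j *)
  exists u : pser p,
    [/\ nottingham u, chi (ps_divt u) = 0 &
        forall i, ~~ (p %| i)%N ->
          act u chi (E p i) = (if i == l then x%:R else 0)
                   + p%:R * (if ((m - l <= i)%N && (i <= m)%N) then (b i)%:R else 0)].
Proof.
move=> hc _ ct _ _ hE.
have ipos : forall i, ~~ (p %| i)%N -> (0 < i)%N.
  by move=> i; case: i => // ; rewrite dvdn0.
have ct' := ct; case: ct' => [[l0 _] [m0 _]].
case: (leqP m l) => lm.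
  exists (pop ('X * 1)); split.
  - by split; rewrite /pop coefXM //= coef1.
  - by rewrite divt_pop chi1.
  move=> i hi; rewrite /act comp_pop ?ipos // mulr1 -E_pop ?ipos // hE //.
  by rewrite (_ : (m - l = 0)%N) ?leq0n //; apply/eqP; rewrite subn_eq0.
have hlm : (l.+1 + (m - l.+1) <= m)%N by rewrite subnKC.
have [w [s [ew Hw]]] := claim hp b hc ct lm hlm.
have w0 : w`_0 = 1 by rewrite ew coefD coef1 coefXnM /= addr0.
have gform : exists g, gam chi m = p%:R * g.
  by have [y hy] := K2 1 ct lm; exists y; rewrite /gam -hy mulr1.
have zp : exists y', - chi (pop w) = p%:R * y'.
  by have [y hy] := K2 s ct (ltnSn l); exists (- y); rewrite ew hy mulrN.
have [c ec] := N1 hp (gam_nz hc ct) gform zp.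
set a := (c%:R : 'F_p).
set w2 := w + 'X^m * a%:P.
have w20 : w2`_0 = 1 by rewrite /w2 coefD coefXnM m0 w0 addr0.
exists (pop ('X * w2)); split.
- by split; rewrite /pop coefXM //=.
- rewrite divt_pop /w2 (D3 _ hc ct w0) coefC eqxx /a (val_Fp_nat hp) (gam_mod _ hp hc ct).
  by rewrite -ec subrr.
move=> i hi; have i0 := ipos i hi.
rewrite /act comp_pop //.
case: (ltnP i (m - l)) => him.
  have [S [_ eS]] := @G2 _ w w2 a%:P m i w0 m0 erefl.
  rewrite eS (D1 _ hc ct (q0lem _ i0)); last by lia.
  have h1 : (m - (l.+1 + (m - l.+1)) < i)%N by rewrite subnKC // subnn.
  rewrite (Hw i hi h1 him) -E_pop // hE // (_ : (i <= m)%N); last by lia.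
  by rewrite /= mulr0 addr0 addrK.
have ew2 : w2 = 1 + 'X^(l.+1) * (s + 'X^(m - l.+1) * a%:P).
  rewrite /w2 ew.
  have -> : 'X^m = 'X^(l.+1) * 'X^(m - l.+1) :> {poly 'F_p} by rewrite -exprD subnKC.
  ring.
have [S [_ eS]] := @G2 _ 1 w2 (s + 'X^(m - l.+1) * a%:P) (l.+1) i (coef1 _ 0) (ltn0Sn _) ew2.
rewrite eS mulr1 (D1 _ hc ct (q0X _ i0)); last by lia.
by rewrite -E_pop // hE // him.
Qed.
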